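(* Let $\mathrm{k}$ be an infinite field and $\mathcal{A}$ a unital associative $\mathrm{k}$-algebra satisfying $\mathbf{H}_{\mathrm{s}}$. Let $A$ be a finite subset of $\mathcal{A}$ with $A\cap U(\mathcal{A})\neq\emptyset$. Then the $\mathrm{k}$-subspace $\mathrm{k}\langle A\rangle$ admits a basis consisting of invertible elements of $\mathcal{A}$.
   Context: $U(\mathcal{A})$ is the group of invertible elements; $\mathrm{k}\langle A\rangle$ is the linear span of $A$. Hypothesis $\mathbf{H}_{\mathrm{s}}$: $\mathcal{A}$ is finite-dimensional over $\mathrm{k}$, or $\mathrm{k}\in\{\mathbb{R},\mathbb{C}\}$ and $\mathcal{A}$ is a Banach algebra over $\mathrm{k}$, or $\mathcal{A}$ is a finite product of field extensions of $\mathrm{k}$. *)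

(* Defs.v *)
From HB Require Import structures.
From mathcomp Require Import all_boot all_order all_algebra.
From mathcomp Require Import reals.
From mathcomp.real_closed Require Import complex.

Set Implicit Arguments.
Unset Strict Implicit.
Unset Printing Implicit Defensive.
Import Order.TTheory GRing.Theory Num.Theory.
Local Open Scope ring_scope.

Definition infinite_field (k : fieldType) : Prop :=
  forall s : seq k, exists x : k, x \notin s.

Definition in_span (k : fieldType) (V : lmodType k) (s : seq V) (x : V) : Prop :=
  exists c : 'I_(size s) -> k, x = \sum_(i < size s) c i *: s`_i.

Definition lin_free (k : fieldType) (V : lmodType k) (s : seq V) : Prop :=
  forall c : 'I_(size s) -> k,
    \sum_(i < size s) c i *: s`_i = 0 -> forall i, c i = 0.

Definition finite_dim (k : fieldType) (V : lmodType k) : Prop :=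
  exists n (v : 'I_n -> V), forall x : V,
    exists c : 'I_n -> k, x = \sum_(i < n) c i *: v i.

Definition cmod (R : realType) (z : R[i]) : R :=
  Num.sqrt (complex.Re z ^+ 2 + complex.Im z ^+ 2).

Definition k_is_R_or_C (k : fieldType) (R : realType) (absk : k -> R) : Prop :=
  (exists phi : {rmorphism k -> R}, bijective phi /\
      forall c, absk c = `|phi c|)
  \/
  (exists psi : {rmorphism k -> R[i]}, bijective psi /\
      forall c, absk c = cmod (psi c)).

Definition banach_algebra (k : fieldType) (Alg : unitAlgType k) : Prop :=
  exists (R : realType) (absk : k -> R) (N : Alg -> R),
    k_is_R_or_C absk /\
    (forall x, 0 <= N x) /\
    (forall x, N x = 0 -> x = 0) /\
    (forall x y, N (x + y) <= N x + N y) /\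
    (forall (c : k) x, N (c *: x) = absk c * N x) /\
    (forall x y, N (x * y) <= N x * N y) /\
    (forall u : nat -> Alg,
        (forall e : R, 0 < e -> exists M, forall m n, (M <= m)%N -> (M <= n)%N ->
             N (u m - u n) < e) ->
        exists l : Alg, forall e : R, 0 < e -> exists M, forall n, (M <= n)%N ->
             N (u n - l) < e).

(* (3) Alg is isomorphic, as a unital k-algebra, to a finite product of
   field extensions K_0, ..., K_{n-1} of k. *)
Definition prod_field_ext (k : fieldType) (Alg : unitAlgType k) : Prop :=
  exists (n : nat) (K : 'I_n -> comUnitAlgType k)
         (f : Alg -> forall i, K i),
    (forall i (x : K i), x != 0 -> x \is a GRing.unit) /\
    (forall x y i, f (x + y) i = f x i + f y i) /\
    (forall x y i, f (x * y) i = f x i * f y i) /\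
    (forall (c : k) x i, f (c *: x) i = c *: f x i) /\
    (forall i, f 1 i = 1) /\
    (forall x y, (forall i, f x i = f y i) -> x = y) /\
    (forall g : forall i, K i, exists x, forall i, f x i = g i).

Definition Hs (k : fieldType) (Alg : unitAlgType k) : Prop :=
  finite_dim Alg \/ banach_algebra Alg \/ prod_field_ext Alg.

(* Main.v *)
Require Import Defs.
From HB Require Import structures.
From mathcomp Require Import all_boot all_order all_algebra.
From mathcomp Require Import reals.
From mathcomp.real_closed Require Import complex.
From mathcomp Require Import ring lra.
From Stdlib Require Import Classical.

Set Implicit Arguments.
Unset Strict Implicit.
Unset Printing Implicit Defensive.
Import Order.TTheory GRing.Theory Num.Theory.
Local Open Scope ring_scope.



Section Span.
Variables (k : fieldType) (V : lmodType k).
Implicit Types (s t : seq V) (x y : V).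

Lemma span0 s : in_span s 0.
Proof. by exists (fun=> 0); rewrite big1 // => i _; rewrite scale0r. Qed.

Lemma spanD s x y : in_span s x -> in_span s y -> in_span s (x + y).
Proof.
move=> [c ->] [d ->]; exists (fun i => c i + d i).
by rewrite -big_split /=; apply: eq_bigr => i _; rewrite scalerDl.
Qed.

Lemma spanZ s a x : in_span s x -> in_span s (a *: x).
Proof.
move=> [c ->]; exists (fun i => a * c i).
by rewrite scaler_sumr; apply: eq_bigr => i _; rewrite scalerA.
Qed.

Lemma spanN s x : in_span s x -> in_span s (- x).
Proof. by move=> h; rewrite -scaleN1r; apply: spanZ. Qed.

Lemma span_mem s x : x \in s -> in_span s x.
Proof.
move=> xs; pose i0 := Ordinal (etrans (index_mem _ _) xs) .
exists (fun i => (i == i0)%:R).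
rewrite (bigD1 i0) //= eqxx scale1r big1 ?addr0 ?nth_index //.
by move=> i /negbTE ->; rewrite scale0r.
Qed.

Lemma span_sub s t x : (forall y, y \in s -> in_span t y) -> in_span s x -> in_span t x.
Proof.
move=> h [c ->]; apply: (big_ind (in_span t)) => //.
- exact: span0.
- exact: spanD.
- by move=> i _; apply: spanZ; apply: h; apply: mem_nth.
Qed.

Lemma lin_free_cons a s : lin_free s -> ~ in_span s a -> lin_free (a :: s).
Proof.
move=> fs na c; rewrite big_ord_recl /= => h.
have c0 : c ord0 = 0.
  apply: NNPP => nz; apply: na.
  exists (fun i => - (c ord0)^-1 * c (lift ord0 i)).
  have nz' : c ord0 != 0 by apply/eqP.
  apply: (scalerI nz'); rewrite scaler_sumr.
  move/eqP: h; rewrite addr_eq0 => /eqP ->; rewrite -sumrN.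
  apply: eq_bigr => i _; rewrite scalerA mulrA mulrN mulfV // mulN1r scaleNr.
  by [].
have hs : forall i, c (lift ord0 i) = 0.
  apply: fs; move: h; rewrite c0 scale0r add0r.
  by [].
move=> [[|j] Hj]; first by rewrite -c0; congr c; apply: val_inj.
have Hj' : (j < size s)%N by [].
by rewrite -(hs (Ordinal Hj')); congr c; apply: val_inj.
Qed.
End Span.



Lemma span_mono (k : fieldType) (V : lmodType k) (s t : seq V) x :
  {subset s <= t} -> in_span s x -> in_span t x.
Proof. by move=> st; apply: span_sub => y /st; apply: span_mem. Qed.

Lemma extract (k : fieldType) (V : lmodType k) (A S : seq V) : lin_free S ->
  exists R, lin_free (R ++ S) /\ {subset R <= A} /\
     (forall x, x \in A -> in_span (R ++ S) x).
Proof.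
elim: A S => [|a A IH] S fS; first by exists [::].
case: (classic (in_span S a)) => ha.
  have [R [fR [sR hR]]] := IH S fS.
  exists R; split=> //; split.
    by move=> x /sR xA; rewrite inE xA orbT.
  move=> x; rewrite inE => /orP [/eqP -> | /hR //].
  by apply: span_mono ha => y yS; rewrite mem_cat yS orbT.
have [R [fR [sR hR]]] := IH (a :: S) (lin_free_cons fS ha).
exists (rcons R a); rewrite cat_rcons; split=> //; split.
  by move=> x; rewrite mem_rcons !inE => /orP [-> // | /sR ->]; rewrite orbT.
move=> x; rewrite inE => /orP [/eqP -> | /hR //].
by apply: span_mem; rewrite mem_cat inE eqxx orbT.
Qed.

Section Main.
Variables (k : fieldType) (Alg : unitAlgType k).
Hypothesis KEY : forall w : Alg, exists t : k, t != 0 /\ 1 + t *: w \is a GRing.unit.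

Lemma perturb (u : Alg) (A : seq Alg) : u \is a GRing.unit ->
  exists A', (forall b, b \in A' -> b \is a GRing.unit) /\
    (forall a, a \in A -> in_span (u :: A') a) /\
    (forall b, b \in A' -> in_span (u :: A) b).
Proof.
move=> uU; elim: A => [|a A [A' [h1 [h2 h3]]]]; first by exists [::].
have [t [t0 tU]] := KEY (u^-1 * a).
have eb : u * (1 + t *: (u^-1 * a)) = u + t *: a.
  by rewrite mulrDr mulr1 scalerAr mulrA mulrV // mul1r.
exists (u + t *: a :: A'); split; [|split].
- move=> b; rewrite inE => /orP [/eqP -> | /h1 //].
  by rewrite -eb unitrMr.
- move=> x; rewrite inE => /orP [/eqP -> | /h2 hx].
    have ea : t^-1 *: ((u + t *: a) - u) = a.
      by rewrite addrC addKr scalerA mulVf // scale1r.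
    rewrite -[X in in_span _ X]ea.
    apply: spanZ; apply: spanD; first by apply: span_mem; rewrite !inE eqxx orbT.
    by apply: spanN; apply: span_mem; rewrite inE eqxx.
  by apply: span_mono hx => y; rewrite !inE => /orP [->|->]; rewrite ?orbT.
- move=> b; rewrite inE => /orP [/eqP -> | /h3 hb].
    apply: spanD; first by apply: span_mem; rewrite inE eqxx.
    by apply: spanZ; apply: span_mem; rewrite !inE eqxx orbT.
  by apply: span_mono hb => y; rewrite !inE => /orP [->|->]; rewrite ?orbT.
Qed.

Lemma main_from_key (A : seq Alg) (hA : exists2 a, a \in A & a \is a GRing.unit) :
  exists B : seq Alg,
    (forall b, b \in B -> b \is a GRing.unit) /\
    lin_free B /\
    (forall x : Alg, in_span B x <-> in_span A x).
Proof.
case: hA => u uA uU.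
have [A' [h1 [h2 h3]]] := perturb A uU.
have f0 : lin_free ([::] : seq Alg) by move=> c _ [].
have [R [fR [sR hR]]] := extract (u :: A') f0.
rewrite cats0 in fR hR.
exists R; split; [|split] => //.
  by move=> b /sR; rewrite inE => /orP [/eqP -> | /h1].
move=> x; split.
  apply: span_sub => y /sR; rewrite inE => /orP [/eqP -> | /h3].
    by apply: span_mem.
  by apply: span_mono => z; rewrite inE => /orP [/eqP -> | //].
apply: span_sub => y /h2; exact: span_sub.
Qed.
End Main.



Lemma many (k : fieldType) : infinite_field k -> forall m,
  exists s : seq k, size s = m /\ uniq s /\ 0 \notin s.
Proof.
move=> hk; elim=> [|m [s [hs [us ns]]]]; first by exists [::].
have [x hx] := hk (0 :: s).
move: hx; rewrite inE negb_or => /andP [x0 xs].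
exists (x :: s); rewrite /= hs xs us; split=> //; split=> //.
by rewrite inE negb_or eq_sym x0.
Qed.

Lemma key_prod (k : fieldType) (Alg : unitAlgType k) : infinite_field k ->
  prod_field_ext Alg -> forall w : Alg, exists t : k, t != 0 /\ 1 + t *: w \is a GRing.unit.
Proof.
move=> hk [n [K [f [hU [hD [hM [hZ [h1 [hinj hsurj]]]]]]]]] w.
have fE : forall (t : k) i, f (1 + t *: w) i = 1 + t *: f w i.
  by move=> t i; rewrite hD h1 hZ.
have [s [ss [us ns]]] := many hk n.+1.
suff [t ts ht] : exists2 t, t \in s & forall i, f (1 + t *: w) i != 0.
  exists t; split; first by apply: contraNneq ns => <-.
  have [x hx] := hsurj (fun i => (f (1 + t *: w) i)^-1).
  apply/unitrP; exists x; split; apply: hinj => i; rewrite hM hx h1.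
    by rewrite mulVr //; apply: hU.
  by rewrite mulrV //; apply: hU.
apply: NNPP => hn.
have hall : forall t, t \in s -> exists i, f (1 + t *: w) i == 0.
  move=> t ts; apply: NNPP => hne; apply: hn; exists t => // i.
  by apply/negP => hi; apply: hne; exists i.
pose g t := [pick i | f (1 + t *: w) i == 0].
have gS : forall t, t \in s -> exists2 i, g t = Some i & f (1 + t *: w) i == 0.
  move=> t ts; rewrite /g; case: pickP => [i hi|hnone]; first by exists i.
  by have [i hi] := hall t ts; rewrite hnone in hi.
have ginj : {in s &, injective g}.
  move=> t t' ts t's e.
  have [i gi hi] := gS t ts; have [i' gi' hi'] := gS t' t's.
  move: e; rewrite gi gi' => -[ei]; subst i'.
  move: hi hi'; rewrite !fE => /eqP hi /eqP hi'.
  have : (t - t') *: f w i == 0.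
    rewrite scalerBl.
    have -> : t *: f w i - t' *: f w i = (1 + t *: f w i) - (1 + t' *: f w i).
      by rewrite opprD addrACA subrr add0r.
    by rewrite hi hi' subrr.
  rewrite scaler_eq0 subr_eq0 => /orP [/eqP //|/eqP y0].
  by move: hi; rewrite y0 scaler0 addr0 => /eqP; rewrite oner_eq0.
have := uniq_leq_size (s2 := [seq Some i | i <- enum 'I_n]) (introT idP (etrans (map_inj_in_uniq ginj) us)).
rewrite size_map size_map size_enum_ord ss ltnn => H; suff hsub : {subset [seq g i | i <- s] <= [seq Some i | i <- enum (ordinal n)]} by have := H hsub.
move=> o /mapP [t ts ->]; have [i -> _] := gS t ts.
by apply: map_f; rewrite mem_enum.
Qed.



Lemma key_of_shift (k : fieldType) (Alg : unitAlgType k) (w : Alg) (l : k) :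
  l != 0 -> (w - l%:A) \is a GRing.unit ->
  exists t : k, t != 0 /\ 1 + t *: w \is a GRing.unit.
Proof.
move=> l0 hU; exists (- l^-1); split; first by rewrite oppr_eq0 invr_eq0.
have -> : 1 + (- l^-1) *: w = (- l^-1)%:A * (w - l%:A).
  rewrite mulr_algl scalerBr scalerA mulNr mulVf // scaleN1r opprK addrC.
  by [].
rewrite unitrMl //; apply/unitrP; exists (- l)%:A.
rewrite -!scalerAl !mul1r !scalerA !mulrN !mulNr opprK mulVf // mulfV //.
by rewrite opprK scale1r.
Qed.

Lemma key_fd (k : fieldType) (Alg : unitAlgType k) : infinite_field k ->
  finite_dim Alg -> forall w : Alg, exists t : k, t != 0 /\ 1 + t *: w \is a GRing.unit.
Proof.
move=> hk [n [v hv]] w.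
have [F hF] := fin_all_exists (fun j : 'I_n.+1 => hv (w ^+ j)).
pose M : 'M[k]_(n.+1, n) := \matrix_(j, i) F j i.
have kM : kermx M != 0.
  by rewrite -mxrank_eq0 mxrank_ker subn_eq0 -ltnNge ltnS rank_leq_col.
have [x /sub_kermxP xM x0] := rowV0Pn kM.
have rel : \sum_(j < n.+1) x 0 j *: w ^+ j = 0.
  transitivity (\sum_(i < n) (x *m M) 0 i *: v i); last first.
    by rewrite xM big1 // => i _; rewrite mxE scale0r.
  under eq_bigr do rewrite hF scaler_sumr.
  rewrite exchange_big /=; apply: eq_bigr => i _.
  rewrite !mxE scaler_suml; apply: eq_bigr => j _.
  by rewrite scalerA mxE.
pose p : {poly k} := \poly_(j < n.+1) x 0 (inord j).
have p0 : p != 0.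
  apply: contra x0 => /eqP p0; apply/eqP/rowP => j; rewrite !mxE.
  have := congr1 (fun q : {poly k} => q`_j) p0.
  by rewrite /= coef_poly ltn_ord coef0 inord_val.
have hp : horner_alg w p = 0.
  rewrite /p poly_def raddf_sum /= -[RHS]rel; apply: eq_bigr => j _.
  by rewrite linearZ /= rmorphXn /= horner_algX mulr_algl inord_val.
have [s [ss [us ns]]] := many hk n.+1.
have : ~~ all (root p) s.
  apply/negP => hall; have := max_poly_roots p0 hall us.
  by rewrite ss ltnNge size_poly.
case/allPn => l ls nr.
have l0 : l != 0 by apply: contraNneq ns => <-.
apply: (key_of_shift l0).
have : root (p - (p.[l])%:P) l by rewrite rootE hornerD hornerN hornerC subrr.
case/factor_theorem => q hq.
have hq' : p - (p.[l])%:P = ('X - l%:P) * q by rewrite hq mulrC.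
have e1 := congr1 (horner_alg w) hq.
have e2 := congr1 (horner_alg w) hq'.
rewrite rmorphB /= horner_algC hp rmorphM /= rmorphB /= horner_algX horner_algC sub0r in e1.
rewrite rmorphB /= horner_algC hp rmorphM /= rmorphB /= horner_algX horner_algC sub0r in e2.
have c0 : p.[l] != 0 by [].
apply/unitrP; exists (- (p.[l])^-1 *: horner_alg w q); split.
  by rewrite -scalerAl -e1 scalerN scaleNr opprK scalerA mulVf // scale1r.
by rewrite -scalerAr -e2 scalerN scaleNr opprK scalerA mulVf // scale1r.
Qed.



Lemma absk_props (k : fieldType) (R : realType) (absk : k -> R) :
  k_is_R_or_C absk ->
  [/\ absk 0 = 0, absk (-1) = 1 &
      forall r : R, 0 < r -> exists t : k, t != 0 /\ absk t = r].
Proof.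
case=> [[phi [[g phig gphi] ha]] | [psi [[g psig gpsi] ha]]].
  split; first by rewrite ha rmorph0 normr0.
    by rewrite ha rmorphN1 normrN normr1.
  move=> r r0; exists (g r); rewrite ha gphi gtr0_norm //; split=> //.
  by apply: contraTneq r0 => e; rewrite -(gphi r) e rmorph0 ltxx.
split.
- by rewrite ha rmorph0 /cmod /= expr0n addr0 sqrtr0.
- by rewrite ha rmorphN1 /cmod /= oppr0 expr0n addr0 sqrrN expr1n sqrtr1.
move=> r r0; exists (g (r%:C)%C); rewrite ha gpsi /cmod /= expr0n addr0 sqrtr_sqr gtr0_norm //.
split=> //; apply: contraTneq r0 => e.
have := congr1 (@complex.Re R) (gpsi (r%:C)%C); rewrite e rmorph0 /= => <-.
by rewrite ltxx.
Qed.



Lemma small_geom (R : realType) (a e : R) : 0 <= a -> 0 < e ->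
  exists M, forall n, (M <= n)%N -> a * (2^-1) ^+ n < e.
Proof.
move=> a0 e0; exists (Num.bound (a / e)) => n hn.
have h1 := archi_boundP (divr_ge0 a0 (ltW e0)).
have h2 : (Num.bound (a / e))%:R <= n%:R :> R by rewrite ler_nat.
have h3 : n%:R < 2 ^+ n :> R.
  by rewrite -natrX ltr_nat ltn_expl.
have h4 : a / e < 2 ^+ n by apply: lt_le_trans h1 (le_trans h2 (ltW h3)).
have p2 : 0 < 2 ^+ n :> R by apply: exprn_gt0.
rewrite ltr_pdivrMr // in h4.
by rewrite exprVn ltr_pdivrMr // mulrC.
Qed.

Section Neumann.
Variables (k : fieldType) (Alg : unitAlgType k) (R : realType) (N : Alg -> R).
Hypothesis Nge0 : forall x, 0 <= N x.
Hypothesis Ndef : forall x, N x = 0 -> x = 0.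
Hypothesis Ntri : forall x y, N (x + y) <= N x + N y.
Hypothesis NN : forall x, N (- x) = N x.
Hypothesis N0 : N 0 = 0.
Hypothesis Nmul : forall x y, N (x * y) <= N x * N y.
Hypothesis Ncomp : forall u : nat -> Alg,
        (forall e : R, 0 < e -> exists M, forall m n, (M <= m)%N -> (M <= n)%N ->
             N (u m - u n) < e) ->
        exists l : Alg, forall e : R, 0 < e -> exists M, forall n, (M <= n)%N ->
             N (u n - l) < e.

Lemma N_small x : (forall e, 0 < e -> N x < e) -> x = 0.
Proof.
move=> h; apply: Ndef; apply/eqP; rewrite eq_le Nge0 andbT leNgt.
by apply/negP => hp; have := h _ hp; rewrite ltxx.
Qed.

Lemma NB x y : N (x - y) = N (y - x).
Proof. by rewrite -NN opprB. Qed.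

Variable b : Alg.
Hypothesis hb : N b <= 2^-1.

Let C := N 1 + 1.
Let q : R := 2^-1.

Lemma C_ge0 : 0 <= C.
Proof. by rewrite /C addr_ge0. Qed.

Lemma powb j : N (b ^+ j) <= C * q ^+ j.
Proof.
elim: j => [|j IH]; first by rewrite !expr0 mulr1 lerDl ler01.
rewrite exprS; apply: le_trans (Nmul _ _) _.
rewrite exprS mulrCA; apply: ler_pM => //.
Qed.

Let S n := \sum_(j < n) b ^+ j.

Lemma Sdiff n d : N (S (n + d) - S n) <= 2 * C * (q ^+ n - q ^+ (n + d)).
Proof.
elim: d => [|d IH]; first by rewrite addn0 !subrr N0 mulr0.
rewrite addnS /S big_ord_recr /= -/(S (n + d)).
have -> : S (n + d) + b ^+ (n + d) - S n = (S (n + d) - S n) + b ^+ (n + d).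
  by rewrite addrAC.
apply: le_trans (Ntri _ _) _; apply: le_trans (lerD IH (powb _)) _.
rewrite exprS /q; set Q := (2^-1) ^+ (n + d); set P := (2^-1) ^+ n.
rewrite le_eqVlt; apply/orP; left; apply/eqP; by field.
Qed.

Lemma Scauchy m n : N (S m - S n) <= 2 * C * q ^+ (minn m n).
Proof.
have hq : forall n d, 2 * C * (q ^+ n - q ^+ (n + d)) <= 2 * C * q ^+ n.
  move=> n' d; apply: ler_wpM2l; first by rewrite mulr_ge0 // C_ge0.
  by rewrite gerBl exprn_ge0 // /q invr_ge0.
case: (leqP n m) => hnm.
  rewrite -(subnKC hnm); apply: le_trans (Sdiff _ _) (hq _ _).
rewrite NB -(subnKC (ltnW hnm)).
apply: le_trans (Sdiff _ _) (hq _ _).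
Qed.

Lemma teleL n : (1 - b) * S n = 1 - b ^+ n.
Proof.
elim: n => [|n IH]; first by rewrite /S big_ord0 mulr0 expr0 subrr.
rewrite /S big_ord_recr /= -/(S n) mulrDr IH mulrBl mul1r -exprS.
by rewrite addrA subrK.
Qed.

Lemma teleR n : S n * (1 - b) = 1 - b ^+ n.
Proof.
elim: n => [|n IH]; first by rewrite /S big_ord0 mul0r expr0 subrr.
rewrite /S big_ord_recr /= -/(S n) mulrDl IH mulrBr mulr1 -exprSr.
by rewrite addrA subrK.
Qed.

Lemma neumann : (1 - b) \is a GRing.unit.
Proof.
have [l hl] : exists l : Alg, forall e : R, 0 < e -> exists M, forall n, (M <= n)%N ->
             N (S n - l) < e.
  apply: Ncomp => e e0.
  have [M hM] := small_geom (mulr_ge0 (ler0n _ 2) C_ge0) e0.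
  exists M => m n hm hn; apply: le_lt_trans (Scauchy m n) _; apply: hM.
  by rewrite leq_min hm hn.
have key : forall z : Alg, (forall n, N z <= N (1 - b) * N (l - S n) + N (b ^+ n)) -> z = 0.
  move=> z hz; apply: N_small => e e0.
  pose A := N (1 - b) + 1.
  have A0 : 0 < A by rewrite /A ltr_pwDr.
  have e2 : 0 < e / 2 by rewrite divr_gt0.
  have [M1 hM1] := hl (e / 2 / A) (divr_gt0 e2 A0).
  have [M2 hM2] := small_geom C_ge0 e2.
  have hn1 := hM1 (maxn M1 M2) (leq_maxl _ _).
  have hn2 := hM2 (maxn M1 M2) (leq_maxr _ _).
  apply: le_lt_trans (hz (maxn M1 M2)) _.
  have hp := powb (maxn M1 M2).
  rewrite NB in hn1.
  have hA : N (1 - b) * N (l - S (maxn M1 M2)) <= e / 2.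
    have -> : e / 2 = A * (e / 2 / A) by field; rewrite lt0r_neq0.
    apply: ler_pM => //; last exact: ltW.
    by rewrite /A lerDl.
  have : e = e / 2 + e / 2 by field.
  move=> ->; apply: ler_ltD => //; apply: le_lt_trans hp hn2.
apply/unitrP; exists l; split.
  apply/eqP; rewrite -subr_eq0; apply/eqP; apply: key => n.
  have -> : l * (1 - b) - 1 = (l - S n) * (1 - b) - b ^+ n.
    by rewrite mulrBl teleR opprB addrAC addrA subrK.
  apply: le_trans (Ntri _ _) _; rewrite NN lerD2r.
  by apply: le_trans (Nmul _ _) _; rewrite mulrC.
apply/eqP; rewrite -subr_eq0; apply/eqP; apply: key => n.
have -> : (1 - b) * l - 1 = (1 - b) * (l - S n) - b ^+ n.
  by rewrite mulrBr teleL opprB addrAC addrA subrK.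
apply: le_trans (Ntri _ _) _; rewrite NN lerD2r.
exact: Nmul.
Qed.
End Neumann.

Lemma key_banach (k : fieldType) (Alg : unitAlgType k) :
  banach_algebra Alg -> forall w : Alg, exists t : k, t != 0 /\ 1 + t *: w \is a GRing.unit.
Proof.
move=> [R [absk [N [hRC [Nge0 [Ndef [Ntri [Nsc [Nmul Ncomp]]]]]]]]] w.
have [abs0 absN1 rex] := absk_props hRC.
have NN : forall x, N (- x) = N x by move=> x; rewrite -scaleN1r Nsc absN1 mul1r.
have N0 : N 0 = 0 by rewrite -(scale0r (0 : Alg)) Nsc abs0 mul0r.
pose r : R := (2 * (N w + 1))^-1.
have Nw1 : 0 < N w + 1 by rewrite ltr_pwDr.
have r0 : 0 < r by rewrite /r invr_gt0 mulr_gt0.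
have [t [t0 tr]] := rex r r0.
exists t; split=> //.
rewrite -[t *: w]opprK; apply: (neumann Nge0 Ndef Ntri NN N0 Nmul Ncomp).
rewrite NN Nsc tr.
have -> : (2 : R)^-1 = r * (N w + 1) by rewrite /r; field; rewrite lt0r_neq0.
by apply: ler_wpM2l; [exact: ltW | rewrite lerDl].
Qed.

Theorem proposition2p6 (k : fieldType) (Alg : unitAlgType k)
    (hk : infinite_field k) (hs : Hs Alg) (A : seq Alg)
    (hA : exists2 a, a \in A & a \is a GRing.unit) :
  exists B : seq Alg,
    (forall b, b \in B -> b \is a GRing.unit) /\
    lin_free B /\
    (forall x : Alg, in_span B x <-> in_span A x).
Proof.
apply: main_from_key hA.
case: hs => [hfd | [hb | hp]].
- exact: key_fd.
- exact: key_banach.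
- exact: key_prod.
Qed.
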